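(* Let $n,T$ be positive integers, let $\Theta\subseteq\mathbb{R}^n$ be a closed convex set, and let $c^*\in\Theta$. For $t=1,\dots,T$ let $X_t\subseteq\mathbb{R}^n$ be non-empty and compact, and assume the agent's action $x_t\in X_t$ satisfies $x_t\in\arg\max_{x\in X_t}\langle c^*,x\rangle$. Assume: the $\ell_2$-diameter of $\Theta$ is at most $D>0$; the $\ell_2$-diameter of each $X_t$ is at most $K>0$; and there is $B>0$ with $\max\{\langle c-c',x-x'\rangle : c,c'\in\Theta,\ x,x'\in X_t\}\le B$ for all $t$. Let $\hat c_1,\dots,\hat c_T\in\Theta$ be the outputs of Online Newton Step (ONS, described in the context) run on $\Theta$ with the loss functions $$\ell^\eta_t(c)\coloneqq -\eta\langle \hat c_t-c,\hat x_t-x_t\rangle+\eta^2\langle \hat c_t-c,\hat x_t-x_t\rangle^2\qquad (c\in\Theta),$$ where $\hat x_t\in\arg\max_{x\in X_t}\langle \hat c_t,x\rangle$ and $\eta=\frac{1}{5B}$. Then $$R^{c^*}_T\coloneqq\sum_{t=1}^T\langle c^*,x_t-\hat x_t\rangle\ \le\ \tilde R^{c^*}_T\coloneqq\sum_{t=1}^T\langle \hat c_t-c^*,\hat x_t-x_t\rangle\ =\ O\!\left(Bn\ln\!\left(\frac{DKT}{Bn}\right)\right),$$ where the $O$ hides an absolute constant.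
   Context: Online Newton Step (ONS) on a closed convex set $\mathcal{W}\subseteq\mathbb{R}^n$ of $\ell_2$-diameter at most $W$, applied to differentiable losses $q_1,\dots,q_T$, with parameter $\gamma>0$: set $\varepsilon=\frac{n}{W^2\gamma^2}$, $A_0=\varepsilon I_n$, pick any $w_1\in\mathcal{W}$; for $t=1,\dots,T$: play $w_t$, observe $q_t$, set $A_t=A_{t-1}+\nabla q_t(w_t)\nabla q_t(w_t)^\top$ and $w_{t+1}=\arg\min_{w\in\mathcal{W}}\|w_t-\frac1\gamma A_t^{-1}\nabla q_t(w_t)-w\|_{A_t}^2$, where $\|y\|_A=\sqrt{y^\top Ay}$. In this theorem $\mathcal{W}=\Theta$, $W=D$, $w_t=\hat c_t$, $q_t=\ell^\eta_t$ (note $\nabla\ell^\eta_t(c)=\eta(1-2\eta\langle\hat x_t-x_t,\hat c_t-c\rangle)(\hat x_t-x_t)$), and $\gamma=\frac{1}{(1+2\eta B)^2}=\frac{25}{49}$. The learner chooses $\hat c_t$ before observing $(X_t,x_t)$; after round $t$ it observes $(X_t,x_t)$. *)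

(* Defs.v *)
From HB Require Import structures.
From mathcomp Require Import all_boot all_order all_algebra.
From mathcomp Require Import all_classical all_reals all_analysis.
Set Implicit Arguments. Unset Strict Implicit. Unset Printing Implicit Defensive.
Import Order.TTheory GRing.Theory Num.Theory.
Import numFieldNormedType.Exports.
Local Open Scope ring_scope.
Local Open Scope classical_set_scope.

Section Defs.
Context {R : realType} {n : nat}.
Local Notation vec := 'rV[R]_n.

Definition dotp (u v : vec) : R := (u *m v^T) 0 0.
Definition norm2 (u : vec) : R := Num.sqrt (dotp u u).
Definition sqnormA (A : 'M[R]_n) (y : vec) : R := (y *m A *m y^T) 0 0.

Definition diam_le (S : set vec) (D : R) : Prop :=
  forall u v, S u -> S v -> norm2 (u - v) <= D.

Definition is_argmax (X : set vec) (c x : vec) : Prop :=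
  X x /\ forall y, X y -> dotp c y <= dotp c x.

Definition ONS_A (eps : R) (grad : nat -> vec -> vec) (w : nat -> vec) (t : nat)
  : 'M[R]_n :=
  eps%:M + \sum_(1 <= s < t.+1) ((grad s (w s))^T *m grad s (w s)).

Definition is_ONS (W : set vec) (Wd gamma : R) (grad : nat -> vec -> vec)
    (T : nat) (w : nat -> vec) : Prop :=
  let eps := n%:R / (Wd ^+ 2 * gamma ^+ 2) in
  W (w 1%N) /\
  forall t : nat, (1 <= t < T)%N ->
    let A := ONS_A eps grad w t in
    let y := w t - gamma^-1 *: (grad t (w t) *m invmx A) in
    W (w t.+1) /\
    forall v, W v -> sqnormA A (y - w t.+1) <= sqnormA A (y - v).

Definition loss_eta (eta : R) (chat_t xhat_t x_t : vec) (c : vec) : R :=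
  - eta * dotp (chat_t - c) (xhat_t - x_t)
  + eta ^+ 2 * (dotp (chat_t - c) (xhat_t - x_t)) ^+ 2.

Definition grad_loss_eta (eta : R) (chat_t xhat_t x_t : vec) (c : vec) : vec :=
  (eta * (1 - 2 * eta * dotp (xhat_t - x_t) (chat_t - c))) *: (xhat_t - x_t).

End Defs.

(* Main.v *)
Require Import Defs.
From HB Require Import structures.
From mathcomp Require Import all_boot all_order all_algebra.
From mathcomp Require Import all_classical all_reals all_analysis.
From mathcomp Require Import ring lra.
Import Order.TTheory GRing.Theory Num.Theory.
Import numFieldNormedType.Exports.
Local Open Scope ring_scope.

Lemma det_1_rank1 (F : comNzRingType) n (u : 'M[F]_(n,1)) (v : 'M[F]_(1,n)) :
  \det (1%:M + u *m v) = 1 + (v *m u) 0 0.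
Proof.
pose M := block_mx (1%:M : 'M[F]_n) (-u) v (1%:M : 'M[F]_1).
have E1 : M = block_mx 1%:M 0 v 1%:M *m block_mx 1%:M (-u) 0 (1%:M + v *m u).
  rewrite mulmx_block !mul1mx !mulmx1 !mul0mx ?mulmx0 !addr0 ?add0r.
  by rewrite mulmxN addrC addrK.
have E2 : M = block_mx (1%:M + u *m v) (-u) 0 1%:M *m block_mx 1%:M 0 v 1%:M.
  rewrite mulmx_block !mul1mx !mulmx1 !mul0mx ?mulmx0 ?addr0 ?add0r.
  by rewrite mulNmx addrK.
have := congr1 determinant E1; rewrite {1}E2 !det_mulmx !det_lblock !det_ublock !det1 !mul1r !mulr1 => ->.
by rewrite det_mx11 !mxE.
Qed.

Set Implicit Arguments. Unset Strict Implicit.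

Section Had.
Variable R : realFieldType.

Definition pdm n (A : 'M[R]_n) := forall v : 'rV_n, v != 0 -> 0 < (v *m A *m v^T) 0 0.

Lemma pdm_diag n (A : 'M[R]_n) (i : 'I_n) : pdm A -> 0 < A i i.
Proof.
move=> pA; have := pA (delta_mx 0 i).
have -> : ((delta_mx 0 i : 'rV[R]_n) *m A *m (delta_mx 0 i : 'rV[R]_n)^T) 0 0 = A i i.
  by rewrite -rowE trmx_delta -colE !mxE.
apply; apply/negP => /eqP/matrixP/(_ 0 i); rewrite !mxE !eqxx /=.
by move/eqP; rewrite oner_eq0.
Qed.

Lemma hadamard n (A : 'M[R]_n) : A^T = A -> pdm A -> 0 < \det A /\ \det A <= \prod_i A i i.
Proof.
elim: n A => [|n IH] A sA pA; first by rewrite det_mx00 big_ord0 ltr01.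
have Eb : forall i j, A i j = A j i.
  by move=> i j; rewrite -{1}sA mxE.
pose A' : 'M[R]_(1 + n) := A.
pose a := A 0 0.
have a0 : 0 < a := pdm_diag 0 pA.
pose b := ursubmx A'. pose c := dlsubmx A'. pose Dm := drsubmx A'.
have ul : ulsubmx A' = a%:M.
  by rewrite [LHS]mx11_scalar !mxE; congr (A _ _ )%:M; apply/val_inj.
have cb : c = b^T.
  apply/matrixP => i j; rewrite !mxE Eb; congr (A _ _); apply/val_inj => //=.
pose S := Dm - a^-1 *: (c *m b).
have EA : A' = block_mx 1%:M 0 (a^-1 *: c) 1%:M *m block_mx a%:M b 0 S.
  rewrite mulmx_block !mul1mx !mul0mx ?mulmx0 ?addr0 ?add0r.
  rewrite -!scalemxAl mul_mx_scalar scalerA mulVf ?gt_eqF // scale1r.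
  rewrite /S addrC subrK -ul submxK //.
have detA : \det A = a * \det S.
  by have := congr1 determinant EA; rewrite det_mulmx det_lblock det_ublock !det1 !mul1r det_scalar1.
have sS : S^T = S.
  rewrite /S linearB /= linearZ /= trmx_mul cb trmxK; congr (_ - _).
  by apply/matrixP => i j; rewrite !mxE Eb.
have pS : pdm S.
  move=> v vn0.
  pose p := - a^-1 *: (v *m c).
  pose w := row_mx p v.
  have wn0 : w != 0 by rewrite /w row_mx_eq0 negb_and vn0 orbT.
  have := pA w wn0.
  have -> : w *m A *m w^T = v *m S *m v^T; last by [].
  rewrite -/A' -(submxK A') ul {1}/w.
  have -> := mul_row_block p v a%:M b c Dm.
  rewrite /p mul_mx_scalar scalerA mulrN mulfV ?gt_eqF // scaleN1r addNr.
  rewrite /w tr_row_mx.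
  have -> := mul_row_col (0 : 'M[R]_(1,1)) (- a^-1 *: (v *m c) *m b + v *m Dm) p^T v^T.
  rewrite mul0mx add0r.
  rewrite /S mulmxBr mulmxBl mulmxDl addrC; congr (_ + _).
  by rewrite -!scalemxAl -scalemxAr -scalemxAl !mulmxA scaleNr.
have [S0 SH] := IH S sS pS.
split; first by rewrite detA mulr_gt0.
apply: le_trans (_ : a * \prod_i S i i <= _).
  by rewrite detA ler_pM2l.
rewrite big_ord_recl; rewrite ler_pM2l //.
apply: ler_prod => i _; rewrite (ltW (pdm_diag i pS)) /=.
rewrite /S !mxE big_ord1 /Dm !mxE.
have -> : lift ord0 i = rshift 1 i by apply/val_inj.
rewrite gerBl mulr_ge0 ?invr_ge0 ?(ltW a0) // [X in _ * X]Eb -expr2 sqr_ge0 //.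
Qed.
End Had.

Section Pot.
Variables (R : realType) (n : nat) (eps : R) (gs : nat -> 'rV[R]_n).
Hypothesis eps0 : 0 < eps.

Definition Am (t : nat) : 'M[R]_n := eps%:M + \sum_(1 <= s < t.+1) (gs s)^T *m gs s.

Lemma dotpC (u v : 'rV[R]_n) : dotp u v = dotp v u.
Proof. by rewrite /dotp [v *m _](_ : _ = (u *m v^T)^T) ?mxE // trmx_mul trmxK. Qed.

Lemma dotpE (u v : 'rV[R]_n) : dotp u v = \sum_i u 0 i * v 0 i.
Proof. by rewrite /dotp mxE; apply: eq_bigr => i _; rewrite mxE. Qed.

Lemma dotp_ge0 (u : 'rV[R]_n) : 0 <= dotp u u.
Proof. by rewrite dotpE sumr_ge0 // => i _; rewrite -expr2 sqr_ge0. Qed.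

Lemma dotp_gt0 (u : 'rV[R]_n) : u != 0 -> 0 < dotp u u.
Proof.
move=> un0; rewrite lt_def dotp_ge0 andbT; apply: contra un0 => /eqP h.
apply/eqP/rowP => i; rewrite mxE.
move: h; rewrite dotpE => /eqP; rewrite psumr_eq0 => [/allP/(_ i (mem_index_enum _))|].
  by rewrite -expr2 sqrf_eq0 => /eqP.
by move=> j _; rewrite -expr2 sqr_ge0.
Qed.

Lemma Am_sym t : (Am t)^T = Am t.
Proof.
rewrite /Am linearD /= tr_scalar_mx; congr (_ + _).
rewrite linear_sum /=.
by apply: eq_bigr => s _; rewrite trmx_mul trmxK.
Qed.

Lemma Am_quad t (v : 'rV[R]_n) :
  (v *m Am t *m v^T) 0 0 = eps * dotp v v + \sum_(1 <= s < t.+1) (dotp v (gs s)) ^+ 2.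
Proof.
rewrite /Am mulmxDr mulmxDl mxE mul_mx_scalar -scalemxAl mxE; congr (_ + _).
rewrite mulmx_sumr mulmx_suml summxE; apply: eq_bigr => s _.
rewrite !mulmxA -mulmxA mxE big_ord1 expr2 /dotp; congr (_ * _).
by have := dotpC (gs s) v; rewrite /dotp.
Qed.

Lemma Am_pd t : pdm (Am t).
Proof.
move=> v vn0; rewrite Am_quad; apply: ltr_wpDr.
  by rewrite sumr_ge0 // => s _; rewrite sqr_ge0.
by rewrite mulr_gt0 // dotp_gt0.
Qed.

Lemma Am_det_gt0 t : 0 < \det (Am t).
Proof. by case: (hadamard (Am_sym t) (Am_pd t)). Qed.

Lemma Am_unit t : Am t \in unitmx.
Proof. by rewrite unitmxE unitfE gt_eqF // Am_det_gt0. Qed.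

Lemma AmS t : Am t.+1 = Am t + (gs t.+1)^T *m gs t.+1.
Proof. by rewrite /Am big_nat_recr //= addrA. Qed.

Lemma pot_step t :
  (gs t.+1 *m invmx (Am t.+1) *m (gs t.+1)^T) 0 0
    <= ln (\det (Am t.+1)) - ln (\det (Am t)).
Proof.
set g := gs t.+1; set A := Am t.+1; set q := (g *m invmx A *m g^T) 0 0.
have E : Am t = A *m (1%:M + (- (invmx A *m g^T)) *m g).
  rewrite mulmxDr mulmx1 mulNmx mulmxN !mulmxA mulmxV ?Am_unit // mul1mx.
  by rewrite /A AmS addrK.
have dE : \det (Am t) = \det A * (1 - q).
  by rewrite E det_mulmx det_1_rank1 mulmxN mxE mulmxA.
have dA := Am_det_gt0 t.+1; have dt := Am_det_gt0 t.
have q1 : 0 < 1 - q by move: dt; rewrite dE pmulr_rgt0.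
have -> : ln (\det (Am t)) = ln (\det A) + ln (1 - q).
  by rewrite dE lnM // posrE.
have := le_ln1Dx (_ : -1 < - q); rewrite -/(1 - q).
by move/(_ ltac:(lra)) => h; lra.
Qed.

End Pot.

Section Pot2.
Variables (R : realType) (n : nat) (eps : R) (gs : nat -> 'rV[R]_n).
Hypothesis eps0 : 0 < eps.

Lemma pot_sum T :
  \sum_(1 <= t < T.+1) (gs t *m invmx (Am eps gs t) *m (gs t)^T) 0 0
    <= ln (\det (Am eps gs T)) - ln (\det (Am eps gs 0)).
Proof.
elim: T => [|T IH]; first by rewrite big_geq // subrr.
rewrite big_nat_recr //=.
have := pot_step gs eps0 T; lra.
Qed.

Lemma Am_diag T i :
  Am eps gs T i i = eps + \sum_(1 <= s < T.+1) (gs s 0 i) ^+ 2.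
Proof.
rewrite /Am !mxE eqxx mulr1n; congr (_ + _).
rewrite summxE; apply: eq_bigr => s _.
by rewrite mxE big_ord1 !mxE expr2.
Qed.

Lemma logdet_bound T : (0 < n)%N ->
  ln (\det (Am eps gs T)) - ln (\det (Am eps gs 0))
   <= n%:R * ln (1 + (\sum_(1 <= s < T.+1) dotp (gs s) (gs s)) / (n%:R * eps)).
Proof.
move=> n0.
set S := \sum_(1 <= s < T.+1) dotp (gs s) (gs s).
have S0 : 0 <= S by rewrite sumr_ge0 // => s _; exact: dotp_ge0.
have n0R : 0 < n%:R :> R by rewrite ltr0n.
have -> : Am eps gs 0 = eps%:M by rewrite /Am big_geq // addr0.
rewrite det_scalar.
pose mu := (\sum_(i in (predT : {pred 'I_n})) Am eps gs T i i) / #|(predT : {pred 'I_n})|%:R.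
have [hd0 hd] := hadamard (Am_sym eps gs T) (Am_pd gs eps0 T).
have [hag _] := leif_AGM (A := predT) (E := fun i : 'I_n => Am eps gs T i i)
  (fun i _ => ltW (pdm_diag i (Am_pd gs eps0 T))).
have cn : #|(predT : {pred 'I_n})| = n by rewrite cardT size_enum_ord.
have muE : mu = eps * (1 + S / (n%:R * eps)).
  rewrite /mu cn.
  under eq_bigr do rewrite Am_diag.
  rewrite big_split /= sumr_const cn exchange_big /=.
  rewrite /S; under [X in _ * (1 + X / _)]eq_bigr do rewrite dotpE.
  rewrite -!/(S).
  field; rewrite ?gt_eqF //.
have X0 : 0 < 1 + S / (n%:R * eps).
  by rewrite ltr_pwDl // divr_ge0 // ltW // mulr_gt0.
have mu0 : 0 < mu by rewrite muE mulr_gt0.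
have hdet : \det (Am eps gs T) <= mu ^+ n.
  apply: le_trans hd _. move: hag; rewrite -/mu [X in _ <= _ ^+ X]cn.
  by [].
have : ln (\det (Am eps gs T)) <= ln (mu ^+ n).
  by rewrite ler_ln // posrE // exprn_gt0.
move=> h; rewrite lnXn //; move: h.
rewrite lnXn // muE lnM ?posrE // mulrnDl -[ln (1 + _) *+ n]mulr_natl => h; lra.
Qed.
End Pot2.

Local Open Scope classical_set_scope.

Section Proj.
Variables (R : realType) (n : nat).

Definition mk01 (l : R) (h : 0 <= l <= 1) : {i01 R}.
Proof.
refine (@Itv.Def _ (@Itv.num_sem R) (Itv.Real (Interval (BLeft 0%Z) (BRight 1%Z))) l _).
by rewrite /= /Itv.num_sem /= in_itv /= num_real.
Defined.

Lemma mk01E l h : (@mk01 l h)%:num = l. Proof. by []. Qed.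

Lemma convex_mem (W : set 'rV[R]_n) (cW : convex_set (W : set (convex_lmodType 'rV[R]_n)))
  (x y : 'rV[R]_n) l : 0 <= l <= 1 -> W x -> W y -> W (l *: x + (1 - l) *: y).
Proof.
move=> hl Wx Wy.
have := cW x y (mk01 hl); rewrite !inE => /(_ Wx Wy).
by [].
Qed.

Definition bil (A : 'M[R]_n) (x z : 'rV[R]_n) := (x *m A *m z^T) 0 0.

Lemma bilC A x z : A^T = A -> bil A z x = bil A x z.
Proof.
move=> sA; rewrite /bil.
have -> : z *m A *m x^T = (x *m A *m z^T)^T by rewrite !trmx_mul trmxK sA mulmxA.
by rewrite mxE.
Qed.

Lemma quad_expand A x z l : A^T = A ->
  sqnormA A (x - l *: z) = sqnormA A x - 2 * l * bil A x z + l ^+ 2 * sqnormA A z.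
Proof.
move=> sA; have bC := bilC x z sA; move: bC; rewrite /sqnormA /bil => bC.
have tE : (x - l *: z)^T = x^T - l *: z^T by apply/matrixP => i j; rewrite !mxE.
rewrite tE mulmxBl -scalemxAl mulmxBl !mulmxBr -!scalemxAl -!scalemxAr.
move: bC; move: (x *m A *m x^T) (x *m A *m z^T) (z *m A *m x^T) (z *m A *m z^T) => a1 a2 a3 a4.
move=> bC; rewrite !mxE bC; ring.
Qed.

Lemma proj_ineq (W : set 'rV[R]_n) (cW : convex_set (W : set (convex_lmodType 'rV[R]_n)))
  (A : 'M[R]_n) (sA : A^T = A) (psd : forall z, 0 <= sqnormA A z) (y w' : 'rV[R]_n) :
  W w' -> (forall v, W v -> sqnormA A (y - w') <= sqnormA A (y - v)) ->
  forall v, W v -> sqnormA A (w' - v) <= sqnormA A (y - v).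
Proof.
move=> Ww' hmin v Wv.
set e := y - w'; set d := v - w'.
have Qd := psd d; have Qe := psd e.
have key : forall l, 0 <= l <= 1 -> 2 * l * bil A e d <= l ^+ 2 * sqnormA A d.
  move=> l hl; have := hmin _ (convex_mem cW hl Wv Ww').
  have -> : y - (l *: v + (1 - l) *: w') = e - l *: d.
    by apply/rowP => i; rewrite /e /d !mxE; ring.
  rewrite quad_expand //; lra.
have b0 : bil A e d <= 0.
  rewrite leNgt; apply/negP => b0.
  have h0 : 0 < bil A e d + sqnormA A d by lra.
  pose l := bil A e d / (bil A e d + sqnormA A d).
  have l0 : 0 < l by rewrite divr_gt0.
  have l1 : l <= 1 by rewrite ler_pdivrMr // mul1r; lra.
  have := key l; rewrite (ltW l0) l1 => /(_ isT).
  move=> h.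
  have h2 : l * sqnormA A d < bil A e d.
    rewrite /l mulrAC ltr_pdivrMr // ltr_pM2l //; lra.
  have h3 : l * (l * sqnormA A d) < l * bil A e d by rewrite ltr_pM2l.
  have h4 : 0 < l * bil A e d by rewrite mulr_gt0.
  move: h; rewrite expr2 -mulrA -mulrA; lra.
have -> : y - v = e - 1 *: d by apply/rowP => i; rewrite /e /d !mxE; ring.
have -> : w' - v = 0 - 1 *: d by apply/rowP => i; rewrite /d !mxE; ring.
rewrite !quad_expand //.
have -> : bil A 0 d = 0 by rewrite /bil !mul0mx mxE.
have -> : sqnormA A 0 = 0 by rewrite /sqnormA !mul0mx mxE.
lra.
Qed.

Lemma ons_quad (A : 'M[R]_n) (sA : A^T = A) (uA : A \in unitmx) (g u : 'rV[R]_n) c :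
  sqnormA A (u - c *: (g *m invmx A)) =
  sqnormA A u - 2 * c * dotp u g + c ^+ 2 * (g *m invmx A *m g^T) 0 0.
Proof.
have sI : (invmx A)^T = invmx A by rewrite trmx_inv sA.
rewrite quad_expand //; congr (_ - 2 * c * _ + c ^+ 2 * _).
  by rewrite /bil /dotp trmx_mul sI mulmxA -(mulmxA u) mulmxV // mulmx1.
by rewrite /sqnormA trmx_mul sI -!mulmxA mulKmx.
Qed.

Lemma ons_step (A : 'M[R]_n) (sA : A^T = A) (uA : A \in unitmx) (g u : 'rV[R]_n) (ga P : R) :
  0 < ga -> P <= sqnormA A (u - ga^-1 *: (g *m invmx A)) ->
  2 * dotp u g <= ga * (sqnormA A u - P) + ga^-1 * (g *m invmx A *m g^T) 0 0.
Proof.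
move=> ga0; rewrite ons_quad //.
set Q := sqnormA A u; set Dd := dotp u g; set q := (g *m invmx A *m g^T) 0 0.
move=> h; have := ler_wpM2l (ltW ga0) h.
have -> : ga * (Q - 2 * ga^-1 * Dd + ga^-1 ^+ 2 * q) = ga * Q - 2 * Dd + ga^-1 * q.
  by field; rewrite gt_eqF.
lra.
Qed.
End Proj.

Section Dot.
Variables (R : realType) (n : nat).
Implicit Types (a b c : 'rV[R]_n).

Lemma dotpBl a b c : dotp (a - b) c = dotp a c - dotp b c.
Proof. by rewrite /dotp mulmxBl !mxE. Qed.

Lemma dotpBr a b c : dotp a (b - c) = dotp a b - dotp a c.
Proof. by rewrite dotpC dotpBl !(dotpC a). Qed.

Lemma dotpZr a b (k : R) : dotp a (k *: b) = k * dotp a b.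
Proof.
rewrite dotpC /dotp -scalemxAl !mxE; congr (_ * _); apply: eq_bigr => j _.
by rewrite !mxE mulrC.
Qed.

Lemma dotp0r a : dotp a 0 = 0.
Proof. by rewrite /dotp linear0 mulmx0 mxE. Qed.

Lemma dotp_le a (K : R) : 0 <= K -> norm2 a <= K -> dotp a a <= K ^+ 2.
Proof.
move=> K0 h; have := dotp_ge0 a => d0.
rewrite -(sqr_sqrtr d0); apply: lerXn2r => //; rewrite ?nnegrE ?sqrtr_ge0 //.
Qed.
End Dot.

Unset Implicit Arguments.

Theorem theorem1 :
  exists C : nat, forall (R : realType) (n T : nat)
    (Theta : set 'rV[R]_n) (cstar : 'rV[R]_n) (X : nat -> set 'rV[R]_n)
    (x xhat chat : nat -> 'rV[R]_n) (D K B : R),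
    (0 < n)%N -> (0 < T)%N ->
    closed Theta -> convex_set (Theta : set (convex_lmodType 'rV[R]_n)) ->
    Theta cstar ->
    (forall t, (1 <= t <= T)%N -> X t !=set0 /\ compact (X t)) ->
    (forall t, (1 <= t <= T)%N -> is_argmax (X t) cstar (x t)) ->
    0 < D -> diam_le Theta D ->
    0 < K -> (forall t, (1 <= t <= T)%N -> diam_le (X t) K) ->
    0 < B ->
    (forall t, (1 <= t <= T)%N -> forall c c' y y',
       Theta c -> Theta c' -> X t y -> X t y' -> dotp (c - c') (y - y') <= B) ->
    2 <= D * K * T%:R / (B * n%:R) ->
    let eta := (5 * B)^-1 in
    let gamma := ((1 + 2 * eta * B) ^+ 2)^-1 in
    (forall t, (1 <= t <= T)%N -> Theta (chat t)) ->
    (forall t, (1 <= t <= T)%N -> is_argmax (X t) (chat t) (xhat t)) ->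
    is_ONS Theta D gamma
      (fun t => grad_loss_eta eta (chat t) (xhat t) (x t)) T chat ->
    \sum_(1 <= t < T.+1) dotp cstar (x t - xhat t)
      <= \sum_(1 <= t < T.+1) dotp (chat t - cstar) (xhat t - x t)
    /\ \sum_(1 <= t < T.+1) dotp (chat t - cstar) (xhat t - x t)
      <= C%:R * (B * n%:R * ln (D * K * T%:R / (B * n%:R))).
Proof.
exists 28%N => R n T Theta cstar X x xhat chat D K B n0 T0 clT cvT Tc hX hx
  D0 dT K0 dX B0 hB hz eta gamma hchat hxhat hons.
have Rt0 : forall t, (1 <= t <= T)%N ->
    dotp cstar (x t - xhat t) <= dotp (chat t - cstar) (xhat t - x t)
    /\ 0 <= dotp (chat t - cstar) (xhat t - x t) <= B.
  move=> t ht; have [xin hmax] := hx t ht; have [xhin hmaxh] := hxhat t ht.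
  have h1 := hmax _ xhin; have h2 := hmaxh _ xin.
  have h3 := hB t ht _ _ _ _ (hchat t ht) Tc xhin xin.
  move: h1 h2 h3; rewrite (dotpBl (chat t)) (dotpBr (chat t)) (dotpBr cstar) (dotpBr cstar).
  move=> h1 h2 h3; split; lra.
split.
  apply: ler_sum_nat => t /andP [t1 tT].
  by case: (Rt0 t); rewrite ?t1 //= -ltnS.
set N := n%:R.
set z := D * K * T%:R / (B * N).
have N0 : 0 < N by rewrite /N ltr0n.
have eta0 : 0 < eta by rewrite /eta invr_gt0 mulr_gt0.
have etaB : eta * B = 5^-1 by rewrite /eta invfM -mulrA mulVf ?gt_eqF // mulr1.
have gE : gamma = 25 / 49.
  by rewrite /gamma -mulrA etaB; field.
have gamma0 : 0 < gamma by rewrite gE; lra.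
set eps := N / (D ^+ 2 * gamma ^+ 2).
have eps0 : 0 < eps by rewrite /eps divr_gt0 // mulr_gt0 // exprn_gt0.
set gs := fun s => grad_loss_eta eta (chat s) (xhat s) (x s) (chat s).
set g := fun s => xhat s - x s.
have gsE : forall s, gs s = eta *: g s.
  by move=> s; rewrite /gs /grad_loss_eta subrr dotp0r !mulr0 subr0 mulr1.
set u := fun t => chat t - cstar.
set Rt := fun t => dotp (u t) (g t).
have hug : forall t, dotp (u t) (gs t) = eta * Rt t by move=> t; rewrite gsE dotpZr.
have psd : forall t z, 0 <= sqnormA (Am eps gs t) z.
  move=> t v; rewrite /sqnormA Am_quad; apply: addr_ge0.
    by apply: mulr_ge0; [exact: ltW | exact: dotp_ge0].
  by rewrite sumr_ge0 // => i _; rewrite sqr_ge0.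
set F := fun k => if (k.-1 < T)%N then sqnormA (Am eps gs k.-1) (u k) else 0.
set q := fun t => (gs t *m invmx (Am eps gs t) *m (gs t)^T) 0 0.
have [W1 Hst] := hons.
have step : forall t, (1 <= t < T.+1)%N ->
   2 * (eta * Rt t) <= gamma * (F t - F t.+1) + gamma * eta ^+ 2 * Rt t ^+ 2
                       + gamma^-1 * q t.
  move=> t /andP [t1 tT].
  have key : F t.+1 <= sqnormA (Am eps gs t)
                (u t - gamma^-1 *: (gs t *m invmx (Am eps gs t))).
    rewrite /F /=; case: ltnP => htT; last exact: psd.
    have [Wn hmin] := Hst t (introT andP (conj t1 htT)).
    have := proj_ineq cvT (Am_sym eps gs t) (psd t) Wn hmin Tc.
    by rewrite /u addrAC.
  have := ons_step (Am_sym eps gs t) (Am_unit gs eps0 t) gamma0 key.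
  have QE : sqnormA (Am eps gs t) (u t) = F t + (eta * Rt t) ^+ 2.
    case: t t1 tT {key} => // t _ tT.
    rewrite ltnS in tT; rewrite /F /= tT /sqnormA !Am_quad big_nat_recr //= hug; ring.
  rewrite QE hug -/(q t) => h; apply: le_trans h _; rewrite le_eqVlt; apply/orP; left; apply/eqP; ring.
have S1 := ler_sum_nat step.
set SR := \sum_(1 <= t < T.+1) Rt t.
set SR2 := \sum_(1 <= t < T.+1) Rt t ^+ 2.
set Sq := \sum_(1 <= t < T.+1) q t.
have L1 : \sum_(1 <= t < T.+1) (2 * (eta * Rt t)) = 2 * (eta * SR).
  by rewrite /SR !mulr_sumr.
have R1 : \sum_(1 <= t < T.+1) (gamma * (F t - F t.+1) + gamma * eta ^+ 2 * Rt t ^+ 2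
                       + gamma^-1 * q t)
   = gamma * \sum_(1 <= t < T.+1) (F t - F t.+1) + gamma * eta ^+ 2 * SR2 + gamma^-1 * Sq.
  by rewrite [LHS]big_split [in LHS]big_split /= -!mulr_sumr.
have TS : \sum_(1 <= t < T.+1) (F t - F t.+1) = F 1%N - F T.+1.
  rewrite (_ : \sum_(1 <= t < T.+1) (F t - F t.+1) = - \sum_(1 <= t < T.+1) (F t.+1 - F t)).
    by rewrite telescope_sumr // opprB.
  by rewrite -sumrN; apply: eq_bigr => i _; rewrite opprB.
have FT : F T.+1 = 0 by rewrite /F /= ltnn.
have F1 : F 1%N <= eps * D ^+ 2.
  rewrite /F /= T0 /sqnormA Am_quad big_geq // addr0 ler_pM2l //.
  apply: dotp_le; first exact: ltW.
  by apply: dT => //; apply: hchat; rewrite T0.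
have SR2B : SR2 <= B * SR.
  rewrite /SR2 /SR mulr_sumr; apply: ler_sum_nat => t /andP [t1 tT].
  have [_ /andP [r0 rB]] := Rt0 t (introT andP (conj t1 tT)).
  by rewrite expr2 ler_wpM2r.
have Sq1 : Sq <= ln (\det (Am eps gs T)) - ln (\det (Am eps gs 0)) := pot_sum gs eps0 T.
have Sq2 := logdet_bound gs eps0 T n0.
set S := \sum_(1 <= s < T.+1) dotp (gs s) (gs s).
have SK : S <= eta ^+ 2 * (T%:R * K ^+ 2).
  apply: le_trans (_ : \sum_(1 <= s < T.+1) (eta ^+ 2 * K ^+ 2) <= _).
    apply: ler_sum_nat => t /andP [t1 tT].
    rewrite gsE dotpZr dotpC dotpZr mulrA -expr2 ler_pM2l ?exprn_gt0 //.
    apply: dotp_le; first exact: ltW.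
    have ht : (1 <= t <= T)%N by rewrite t1 -ltnS.
    by apply: (dX t ht); [case: (hxhat t ht) | case: (hx t ht)].
  by rewrite sumr_const_nat subn1 /= -mulr_natl; lra.
rewrite L1 R1 TS FT subr0 in S1.
have z2 : (2 : R) <= z by [].
have z0 : 0 < z by lra.
have T1 : (1 : R) <= T%:R by rewrite ler1n.
set L := ln (1 + S / (N * eps)).
have Sratio : S / (N * eps) <= z ^+ 2.
  apply: le_trans (_ : eta ^+ 2 * (T%:R * K ^+ 2) / (N * eps) <= _).
    by rewrite ler_pM2r // invr_gt0 mulr_gt0.
  have -> : eta ^+ 2 * (T%:R * K ^+ 2) / (N * eps)
            = (gamma ^+ 2 / (25 * T%:R)) * z ^+ 2.
    rewrite /eta /eps /z; field.
    by rewrite !gt_eqF ?ltr0n // ?mulr_gt0 ?ltr0n //; lra.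
  rewrite ler_piMl ?exprn_ge0 ?(ltW z0) //.
  rewrite ler_pdivrMr ?mulr_gt0 //; last by lra.
  rewrite gE; lra.
have S0 : 0 <= S by rewrite sumr_ge0 // => s _; exact: dotp_ge0.
have lz2 : (2 : R)^-1 <= ln z.
  have h := le_ln1Dx (_ : -1 < - 2^-1 :> R).
  have e : 1 + - 2^-1 = (2 : R)^-1 by field.
  rewrite e lnV ?posrE // in h.
  have : ln 2 <= ln z by rewrite ler_ln ?posrE //.
  move: (h ltac:(lra)); lra.
have Lz : L <= 3 * ln z.
  apply: le_trans (_ : ln (z ^+ 3) <= _); last by rewrite (lnXn 3 z0) -mulr_natl; lra.
  rewrite /L ler_ln ?posrE ?exprn_gt0 //; last first.
    by rewrite ltr_pwDl // divr_ge0 // ltW // mulr_gt0.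
  apply: le_trans (_ : 1 + z ^+ 2 <= _); first by rewrite lerD2l.
  have : 4 <= z ^+ 2 by rewrite expr2; nra.
  rewrite (exprS z 2); nra.
have SR0 : 0 <= SR.
  rewrite /SR; apply: le_trans (_ : \sum_(1 <= t < T.+1) (0:R) <= _).
    by rewrite big1_eq.
  apply: ler_sum_nat => t /andP [t1 tT].
  by have [_ /andP [r0 _]] := Rt0 t (introT andP (conj t1 tT)).
set lz := ln z.
set E := eta * SR.
have E0 : 0 <= E by rewrite mulr_ge0 // ltW.
have ha : gamma * F 1%N <= 49 / 25 * N.
  apply: le_trans (_ : gamma * (eps * D ^+ 2) <= _); first by rewrite ler_pM2l.
  have -> : gamma * (eps * D ^+ 2) = 49 / 25 * N.
    rewrite /eps gE; field; rewrite gt_eqF //.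
  by [].
have hb : gamma * eta ^+ 2 * SR2 <= E / 5.
  apply: le_trans (_ : gamma * eta ^+ 2 * (B * SR) <= _).
    by rewrite ler_pM2l // mulr_gt0 // exprn_gt0.
  have -> : gamma * eta ^+ 2 * (B * SR) = gamma * (eta * B) * E by rewrite /E; ring.
  rewrite etaB gE; lra.
have hc : gamma^-1 * Sq <= 49 / 25 * (N * (3 * lz)).
  apply: le_trans (_ : gamma^-1 * (N * (3 * lz)) <= _).
    have gi0 : 0 < gamma^-1 by rewrite invr_gt0.
    rewrite ler_pM2l //. have := le_trans Sq1 Sq2; rewrite -/N -/S -/L => h.
    by apply: (le_trans h); rewrite ler_pM2l.
  have -> : gamma^-1 = 49 / 25 by rewrite gE; field.
  by [].
have hd : N <= 2 * (N * lz).
  have : N * 2^-1 <= N * lz by rewrite ler_pM2l.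
  lra.
have hE : E <= 49 / 9 * (N * lz).
  move: S1; rewrite -/E => S1; lra.
have -> : SR = 5 * B * E by rewrite /E /eta; field; rewrite gt_eqF.
have lz0 : 0 <= lz by move: lz2; rewrite -/lz; lra.
have P0 : 0 <= B * N * lz by rewrite !mulr_ge0 // ltW.
apply: le_trans (_ : 5 * B * (49 / 9 * (N * lz)) <= _).
  by rewrite ler_pM2l // mulr_gt0.
have -> : 5 * B * (49 / 9 * (N * lz)) = 245 / 9 * (B * N * lz) by ring.
lra.
Qed.
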